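(* Let $p\in\{2,3\}$ and let $\alpha=\frac{P+\sqrt D}{Q}\in\mathbb{Q}_p$, where $P,Q\in\mathbb{Z}$, $Q\neq0$, and $D$ is a non-square integer with $\sqrt D\in\mathbb{Q}_p$ (so $\alpha$ is a quadratic irrational). Then both Algorithm A and Algorithm B (defined in the context) expand $\alpha$ as an ultimately periodic continued fraction, i.e. there exist $N\ge0$ and $k\ge1$ with $b_{n+k}=b_n$ for all $n\ge N$.
   Context: Fix a prime $p$. Let $\mathcal{R}=\{-\frac{p-1}{2},\dots,0,\dots,\frac{p-1}{2}\}$ if $p$ is odd, and $\mathcal{R}=\{0,1\}$ if $p=2$. Every nonzero $\alpha\in\mathbb{Q}_p$ is written uniquely as $\alpha=\sum_{n\ge r}a_np^n$ with $r=v_p(\alpha)$, all $a_n\in\mathcal{R}$, $a_r\neq 0$. Put $s(\alpha)=\sum_{n=r}^{0}a_np^n$ and $t(\alpha)=\sum_{n=r}^{-1}a_np^n$ (empty sums are $0$). For an algebraic number $\alpha\in\mathbb{Q}_p$ whose minimal polynomial over $\mathbb{Q}$ has degree $d$, let $\operatorname{Tr}(\alpha)$ be its trace over $\mathbb{Q}$ and $\operatorname{round}(x)$ the integer nearest to the real number $x$. Define $\bar s(\alpha)=\operatorname{round}\!\left(\frac{\operatorname{Tr}(\alpha)/d-s(\alpha)}{p}\right)p+s(\alpha)$ and $\bar t(\alpha)=\operatorname{round}\!\left(\operatorname{Tr}(\alpha)/d-t(\alpha)\right)+t(\alpha)$. (For $\alpha=\frac{P+\sqrt D}{Q}$ as in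 the claim, $\operatorname{Tr}(\alpha)/d=P/Q$.) An expansion algorithm starts with $\alpha_0=\alpha$; at step $n$ it chooses $b_n$ by a rule; if $\alpha_n=b_n$ it stops, otherwise it sets $\alpha_{n+1}=\frac{1}{\alpha_n-b_n}$ and continues, producing $[b_0,b_1,\dots]=b_0+\cfrac{1}{b_1+\cfrac{1}{b_2+\cdots}}$. Algorithm A: $b_0=\bar s(\alpha_0)$; for $n\ge1$, $b_n=\bar s(\alpha_n)$ if $v_p(\alpha_n)=0$ and $b_n=\bar t(\alpha_n)$ if $v_p(\alpha_n)<0$. Algorithm B: $b_n=\bar s(\alpha_n)$ if $n$ is even and $b_n=\bar t(\alpha_n)$ if $n$ is odd. *)

(* Defs.v *)
From HB Require Import structures.
From mathcomp Require Import all_boot all_order all_algebra.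
From Stdlib Require Import ClassicalEpsilon.
Set Implicit Arguments. Unset Strict Implicit. Unset Printing Implicit Defensive.
Import Order.TTheory GRing.Theory Num.Theory.
Local Open Scope ring_scope.

Definition vq (p : nat) (q : rat) : int :=
  (logn p `|numq q|%N)%:Z - (logn p `|denq q|%N)%:Z.

(* v_p(q) >= j, with v_p(0) = +oo *)
Definition padic_ge (p : nat) (j : int) (q : rat) : bool :=
  (q == 0) || (j <= vq p q).

Definition digitR (p : nat) (a : int) : bool :=
  if p == 2%N then (a == 0) || (a == 1) else `|a| * 2 <= (p.-1)%:Z.

(* Elements x + y*sqrt(D) of Q(sqrt D), as pairs (x, y) of rationals. *)
Definition K := (rat * rat)%type.

Definition Ksubq (z : K) (c : rat) : K := (z.1 - c, z.2).
Definition Kinv (D : int) (z : K) : K :=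
  let n := z.1 ^+ 2 - D%:~R * z.2 ^+ 2 in (z.1 / n, - z.2 / n).

(* Tr(z)/d, d the degree of the minimal polynomial of z over Q:
   equals the rational part in both cases (z rational or quadratic) *)
Definition Ktrd (z : K) : rat := z.1.

(* rho : nat -> rat is a p-adic Cauchy sequence converging to a square root
   sigma of D in Q_p; z = (x,y) is then embedded as x + y*sigma, which is
   approximated by x + y * rho k. *)
Definition approx (rho : nat -> rat) (z : K) (k : nat) : rat := z.1 + z.2 * rho k.

Definition eventually (P : nat -> Prop) : Prop :=
  exists k0 : nat, forall k, (k0 <= k)%N -> P k.

(* the image of z in Q_p lies in p^j Z_p *)
Definition Kin_pow (p : nat) (rho : nat -> rat) (j : int) (z : K) : Prop :=
  eventually (fun k => padic_ge p j (approx rho z k)).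

Definition fin_digits (p : nat) (lo : nat) (c : rat) : Prop :=
  exists (N : nat) (a : nat -> int), (forall i, digitR p (a i)) /\
    c = \sum_(lo <= i < N) (a i)%:~R / (p%:R ^+ i).

(* s(z) = sum_{n=r}^{0} a_n p^n : the digit sum over exponents n <= 0,
   characterised as the finite R-digit sum (exponents <= 0) with
   z - s(z) in p Z_p;  t(z) similarly with exponents <= -1 and z - t(z) in Z_p *)
Definition is_s (p : nat) (rho : nat -> rat) (z : K) (c : rat) : Prop :=
  fin_digits p 0 c /\ Kin_pow p rho 1 (Ksubq z c).
Definition is_t (p : nat) (rho : nat -> rat) (z : K) (c : rat) : Prop :=
  fin_digits p 1 c /\ Kin_pow p rho 0 (Ksubq z c).

Definition sK p rho z : rat := epsilon (inhabits 0) (is_s p rho z).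
Definition tK p rho z : rat := epsilon (inhabits 0) (is_t p rho z).

Definition roundq (x : rat) : int := Num.floor (x + 2^-1).

Definition sbar p rho (z : K) : rat :=
  (roundq ((Ktrd z - sK p rho z) / p%:R))%:~R * p%:R + sK p rho z.
Definition tbar p rho (z : K) : rat :=
  (roundq (Ktrd z - tK p rho z))%:~R + tK p rho z.

(* v_p(z) < 0 *)
Definition Kvneg p rho (z : K) : Prop := ~ Kin_pow p rho 0 z.

Definition ruleA p rho (n : nat) (z : K) : rat :=
  match n with
  | O => sbar p rho z
  | _ => if excluded_middle_informative (Kvneg p rho z)
         then tbar p rho z else sbar p rho z
  end.
Definition ruleB p rho (n : nat) (z : K) : rat :=
  if odd n then tbar p rho z else sbar p rho z.

Fixpoint cf_alpha (D : int) (rule : nat -> K -> rat) (a0 : K) (n : nat) : K :=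
  match n with
  | O => a0
  | m.+1 => Kinv D (Ksubq (cf_alpha D rule a0 m) (rule m (cf_alpha D rule a0 m)))
  end.
Definition cf_b D rule a0 n : rat := rule n (cf_alpha D rule a0 n).

(* the expansion never stops (alpha_n <> b_n for all n) and the partial
   quotients are ultimately periodic *)
Definition ult_periodic_expansion (D : int) (rule : nat -> K -> rat) (a0 : K) : Prop :=
  (forall n, cf_alpha D rule a0 n <> (cf_b D rule a0 n, 0)) /\
  exists (N k : nat), (0 < k)%N /\
    forall n, (N <= n)%N -> cf_b D rule a0 (n + k) = cf_b D rule a0 n.

(* Main.v *)
Require Import Defs.
From HB Require Import structures.
From mathcomp Require Import all_boot all_order all_algebra.
From mathcomp Require Import zify ring lra.
From Stdlib Require Import ClassicalEpsilon Classical.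
Set Implicit Arguments. Unset Strict Implicit. Unset Printing Implicit Defensive.
Import Order.TTheory GRing.Theory Num.Theory.
Local Open Scope ring_scope.

Section Val.
Variable p : nat.
Hypothesis pr : prime p.

Lemma vq_frac (m d : int) : m != 0 -> d != 0 ->
  vq p (m%:~R / d%:~R) = (logn p `|m|%N)%:Z - (logn p `|d|%N)%:Z.
Proof.
move=> m0 d0; set r := _ / _.
have E : (numq r * d = m * denq r).
  apply: (@intr_inj rat); rewrite !rmorphM /= numqE /r.
  by field; rewrite intr_eq0.
have nr0 : numq r != 0 by rewrite numq_eq0 /r mulf_eq0 invr_eq0 !intr_eq0 negb_or m0 d0.
have := congr1 (fun x => logn p `|x|%N) E => /=.
rewrite !abszM !lognM ?absz_gt0 ?denq_neq0 //.
rewrite /vq => H; lia.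
Qed.

Lemma vq_int (m : int) : vq p m%:~R = (logn p `|m|%N)%:Z.
Proof. by rewrite /vq numq_int denq_int logn1 subr0. Qed.

Lemma vq0 : vq p 0 = 0.
Proof. by have := vq_int 0; rewrite /= logn0. Qed.

Lemma vq1 : vq p 1 = 0.
Proof. by have := vq_int 1; rewrite /= logn1. Qed.

Lemma vq_mul a b : a != 0 -> b != 0 -> vq p (a * b) = vq p a + vq p b.
Proof.
move=> a0 b0.
rewrite -[a]divq_num_den -[b]divq_num_den.
have na : numq a != 0 by rewrite numq_eq0.
have nb : numq b != 0 by rewrite numq_eq0.
have -> : (numq a)%:~R / (denq a)%:~R * ((numq b)%:~R / (denq b)%:~R) =
   (numq a * numq b)%:~R / (denq a * denq b)%:~R :> rat.
  by rewrite !rmorphM /= invfM; ring.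
rewrite !vq_frac ?mulf_neq0 ?denq_neq0 // !abszM !lognM ?absz_gt0 ?denq_neq0 //.
lia.
Qed.

Lemma vq_inv a : vq p a^-1 = - vq p a.
Proof.
have [->|a0] := eqVneq a 0; first by rewrite invr0 vq0.
rewrite -[a]divq_num_den invf_div.
have na : numq a != 0 by rewrite numq_eq0.
rewrite !vq_frac ?denq_neq0 //; lia.
Qed.

Lemma vq_div a b : a != 0 -> b != 0 -> vq p (a / b) = vq p a - vq p b.
Proof. by move=> a0 b0; rewrite vq_mul ?invr_eq0 // vq_inv. Qed.

Lemma vq_exp a n : a != 0 -> vq p (a ^+ n) = (vq p a) *+ n.
Proof.
move=> a0; elim: n => [|n IH]; first by rewrite expr0 mulr0n vq1.
by rewrite exprS vq_mul ?expf_neq0 // IH mulrS.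
Qed.

Lemma vq_p : vq p p%:R = 1.
Proof. by rewrite -[p%:R]/((p%:Z)%:~R) vq_int /= logn_prime ?eqxx. Qed.

Lemma vq_pexp n : vq p (p%:R ^+ n) = n%:Z.
Proof.
rewrite vq_exp ?vq_p; first by lia.
by rewrite pnatr_eq0 -lt0n prime_gt0.
Qed.

Lemma vq_ge0_den a : a != 0 -> 0 <= vq p a -> ~~ (p %| `|denq a|)%N.
Proof.
move=> a0; rewrite /vq => H; apply/negP => pd.
have := coprime_num_den a.
have na : (0 < `|numq a|)%N by rewrite absz_gt0 numq_eq0.
have : (0 < logn p `|denq a|)%N by rewrite logn_gt0 mem_primes pr absz_gt0 denq_neq0.
have [ln0|lnp] := eqVneq (logn p `|numq a|) 0%N.
  move=> ?; move: H; rewrite ln0; lia.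
move=> _ cop.
have : (p %| `|numq a|)%N.
  have : (0 < logn p `|numq a|)%N by rewrite lt0n.
  by rewrite logn_gt0 mem_primes => /and3P [].
move=> pn; have : (p %| gcdn `|numq a| `|denq a|)%N by rewrite dvdn_gcd pn pd.
rewrite (eqP cop) dvdn1 => /eqP p1.
by move: pr; rewrite p1.
Qed.

Lemma vq_1add r : 0 <= vq p r -> 1 + r != 0 -> 0 <= vq p (1 + r).
Proof.
have [->|r0] := eqVneq r 0; first by rewrite addr0 vq1.
move=> H n0; have nd := vq_ge0_den r0 H.
have -> : 1 + r = (denq r + numq r)%:~R / (denq r)%:~R.
  by rewrite rmorphD /= mulrDl divff ?intr_eq0 ?denq_neq0 // divq_num_den.
have dn : denq r + numq r != 0.
  apply/eqP => E; move: n0; rewrite -[r]divq_num_den.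
  have -> : numq r = - denq r by apply/eqP; rewrite -subr_eq0 opprK addrC E.
  by rewrite rmorphN /= mulNr divff ?intr_eq0 ?denq_neq0 // subrr eqxx.
rewrite vq_frac ?denq_neq0 // (@logn_coprime p `|denq r|) ?subr0 //.
by rewrite prime_coprime.
Qed.

Lemma vq_add j a b : a != 0 -> b != 0 -> a + b != 0 ->
  j <= vq p a -> j <= vq p b -> j <= vq p (a + b).
Proof.
wlog le : a b / vq p a <= vq p b.
  move=> W a0 b0 ab0 ha hb; have [h|h] := leP (vq p a) (vq p b); first exact: W.
  by rewrite addrC; apply: W => //; [exact: ltW | rewrite addrC].
move=> a0 b0 ab0 ha hb.
have -> : a + b = a * (1 + b / a) by field.
have h1 : 1 + b / a != 0.
  apply: contraNneq ab0 => E; have -> : a + b = a * (1 + b / a) by field.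
  by rewrite E mulr0.
rewrite vq_mul //.
have : 0 <= vq p (1 + b / a) by apply: vq_1add => //; rewrite vq_div //; lia.
lia.
Qed.
End Val.

Section Pge.
Variable p : nat.
Hypothesis pr : prime p.
Notation pge := (padic_ge p).

Lemma pge0 j : pge j 0. Proof. by rewrite /padic_ge eqxx. Qed.

Lemma pge_add j a b : pge j a -> pge j b -> pge j (a + b).
Proof.
rewrite /padic_ge; have [->|a0] := eqVneq a 0; first by rewrite add0r.
have [->|b0] := eqVneq b 0; first by rewrite addr0 => /= ->; rewrite orbT.
have [//|ab0] := eqVneq (a + b) 0 => /= ha hb.
exact: vq_add.
Qed.

Lemma pge_opp j a : pge j a -> pge j (- a).
Proof.
by rewrite /padic_ge oppr_eq0 /vq numqN denqN abszN.
Qed.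

Lemma pge_sub j a b : pge j a -> pge j b -> pge j (a - b).
Proof. by move=> ha hb; apply: pge_add => //; apply: pge_opp. Qed.

Lemma pge_mul i j a b : pge i a -> pge j b -> pge (i + j) (a * b).
Proof.
rewrite /padic_ge mulf_eq0; have [//|a0] := eqVneq a 0.
have [//|b0] := eqVneq b 0 => /= ha hb.
rewrite vq_mul //; exact: lerD.
Qed.

Lemma pge_le i j a : i <= j -> pge j a -> pge i a.
Proof. by rewrite /padic_ge => ij /orP [->//|h]; rewrite (le_trans ij h) orbT. Qed.

Lemma pge_int (m : int) : pge 0 m%:~R.
Proof. by rewrite /padic_ge vq_int orbT. Qed.

Lemma pge_pexp (n : nat) : pge n (p%:R ^+ n).
Proof. by rewrite /padic_ge vq_pexp // lexx orbT. Qed.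

Lemma pge_ne0 j a : a != 0 -> pge j a = (j <= vq p a).
Proof. by rewrite /padic_ge => /negbTE ->. Qed.

Lemma pge1_1 : ~~ pge 1 1.
Proof. by rewrite /padic_ge oner_eq0 vq1. Qed.

End Pge.

Section Dig.
Variable p : nat.
Hypothesis p23 : p = 2%N \/ p = 3%N.
Lemma pr : prime p. Proof. by case: p23 => ->. Qed.
Notation pge := (padic_ge p).

Lemma pnz : (p%:R : rat) != 0.
Proof. by rewrite pnatr_eq0 -lt0n prime_gt0 // pr. Qed.

Lemma pexp_nz n : (p%:R : rat) ^+ n != 0.
Proof. exact: expf_neq0 pnz. Qed.

Lemma pge_dvd (m : int) : (p %| `|m|)%N -> pge 1 m%:~R.
Proof.
have [->|m0] := eqVneq m 0; first by rewrite pge0.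
move=> pm; rewrite pge_ne0 ?intr_eq0 // vq_int //.
have : (0 < logn p `|m|)%N by rewrite logn_gt0 mem_primes pr absz_gt0 m0.
lia.
Qed.

Lemma pge_invd (d : int) : ~~ (p %| `|d|)%N -> pge 0 (d%:~R)^-1.
Proof.
move=> nd; have d0 : d != 0 by apply: contraNneq nd => ->.
rewrite pge_ne0 ?invr_eq0 ?intr_eq0 // vq_inv ?pr // (vq_int p d) logn_coprime //.
by rewrite prime_coprime ?pr.
Qed.

Lemma pge_pinv (n : nat) : pge (- n%:Z) ((p%:R ^+ n)^-1).
Proof. by rewrite pge_ne0 ?invr_eq0 ?pexp_nz // vq_inv ?pr // (vq_pexp pr n). Qed.

Lemma digit0 r : pge 0 r -> exists a : int, digitR p a /\ pge 1 (r - a%:~R).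
Proof.
have [->|r0] := eqVneq r 0.
  move=> _; exists 0; split; first by case: p23 => ->.
  by rewrite subr0 pge0.
move=> h; have nd : ~~ (p %| `|denq r|)%N by apply: (vq_ge0_den pr r0); rewrite -pge_ne0.
have key : forall a : int, (p %| `|(numq r - a * denq r)%R|)%N -> pge 1 (r - a%:~R).
  move=> a ha.
  have -> : r - a%:~R = (numq r - a * denq r)%:~R * ((denq r)%:~R)^-1.
    rewrite rmorphB rmorphM /= mulrBl -mulrA divff ?intr_eq0 ?denq_neq0 //.
    by rewrite mulr1 divq_num_den.
  by have := pge_mul pr (pge_dvd ha) (pge_invd nd); rewrite addr0.
case: p23 key nd => -> key nd.
- exists (numq r %% 2)%Z; split.
    rewrite /digitR /=; have : (numq r %% 2)%Z = 0 \/ (numq r %% 2)%Z = 1 by lia.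
    by case=> ->.
  apply: key; have : (numq r %% 2)%Z = 0 \/ (numq r %% 2)%Z = 1 by lia.
  case=> e; rewrite e; lia.
- set n := numq r; set d := denq r in key nd *.
  have : (n %% 3)%Z = 0 \/ (n %% 3)%Z = 1 \/ (n %% 3)%Z = 2 by lia.
  have : (d %% 3)%Z = 1 \/ (d %% 3)%Z = 2 by lia.
  case=> hd [hn|[hn|hn]].
  + by exists 0; split => //; apply: key; lia.
  + by exists 1; split => //; apply: key; lia.
  + by exists (-1); split => //; apply: key; lia.
  + by exists 0; split => //; apply: key; lia.
  + by exists (-1); split => //; apply: key; lia.
  + by exists 1; split => //; apply: key; lia.
Qed.

Lemma digits_ex n r : pge (- n%:Z) r -> exists a : nat -> int, (forall i, digitR p (a i)) /\
  pge 1 (r - \sum_(0 <= i < n.+1) (a i)%:~R / p%:R ^+ i).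
Proof.
elim: n r => [|n IH] r h.
  have [a [da ha]] := digit0 h.
  exists (fun _ => a); split => //.
  by rewrite big_nat1 expr0 divr1.
have h0 : pge 0 (r * p%:R ^+ n.+1).
  by have := pge_mul pr h (pge_pexp pr n.+1); rewrite addNr.
have [a0 [da0 ha0]] := digit0 h0.
have h1 : pge (- n%:Z) (r - a0%:~R / p%:R ^+ n.+1).
  have -> : r - a0%:~R / p%:R ^+ n.+1 = (r * p%:R ^+ n.+1 - a0%:~R) * (p%:R ^+ n.+1)^-1.
    by rewrite mulrBl -mulrA divff ?pexp_nz // mulr1.
  have := pge_mul pr ha0 (pge_pinv n.+1).
  have -> : 1 + - (n.+1)%:Z = - n%:Z by lia.
  done.
have [a' [da' ha']] := IH _ h1.
exists (fun i => if i == n.+1 then a0 else a' i); split.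
  by move=> i; case: eqP.
rewrite big_nat_recr //= eqxx.
rewrite (@eq_big_nat _ _ _ 0 n.+1 _ (fun i => (a' i)%:~R / p%:R ^+ i)); last first.
  by move=> i /andP [_ hi]; rewrite ifN // neq_ltn hi.
by move: ha'; congr (pge _ _); ring.
Qed.

End Dig.

Lemma roundq_near x : `|x - (roundq x)%:~R| <= 2^-1.
Proof.
rewrite /roundq; have h1 := real_floor_le (num_real (x + 2^-1)).
have h2 := real_floorD1_gt (num_real (x + 2^-1)).
move: h1 h2; set f := Num.floor _; rewrite rmorphD /= => h1 h2.
rewrite ler_norml; apply/andP; split; lra.
Qed.

Definition zp (p : nat) (r : rat) := exists (m : int) (j : nat), r = m%:~R / p%:R ^+ j.

Section Seq.
Variable p : nat.
Hypothesis p23 : p = 2%N \/ p = 3%N.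
Variable rho : nat -> rat.
Hypothesis Hc : forall k : nat, padic_ge p k%:Z (rho k.+1 - rho k).
Notation pge := (padic_ge p).
Let pr := pr p23.

Lemma zp_int (m : int) : zp p m%:~R.
Proof. by exists m, 0%N; rewrite expr0 divr1. Qed.

Lemma zp_add a b : zp p a -> zp p b -> zp p (a + b).
Proof.
move=> [m [i ->]] [n [j ->]]; exists (m * p ^+ j + n * p ^+ i), (i + j)%N.
rewrite rmorphD !rmorphM /= !rmorphXn /= exprD.
by field; rewrite !pexp_nz.
Qed.

Lemma zp_opp a : zp p a -> zp p (- a).
Proof. by move=> [m [i ->]]; exists (- m), i; rewrite rmorphN mulNr. Qed.

Lemma zp_sub a b : zp p a -> zp p b -> zp p (a - b).
Proof. by move=> ha hb; apply: zp_add => //; apply: zp_opp. Qed.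

Lemma zp_mul a b : zp p a -> zp p b -> zp p (a * b).
Proof.
move=> [m [i ->]] [n [j ->]]; exists (m * n), (i + j)%N.
rewrite rmorphM /= exprD.
by field; rewrite !pexp_nz.
Qed.

Lemma zp_pinv (a : int) (i : nat) : zp p (a%:~R / p%:R ^+ i).
Proof. by exists a, i. Qed.

Lemma zp_digits lo N (a : nat -> int) : zp p (\sum_(lo <= i < N) (a i)%:~R / p%:R ^+ i).
Proof.
elim/big_ind: _ => //; first exact: (zp_int 0).
- exact: zp_add.
- by move=> i _; apply: zp_pinv.
Qed.

Lemma cauchy k j : (k <= j)%N -> pge k (rho j - rho k).
Proof.
elim: j => [|j IH]; first by rewrite leqn0 => /eqP ->; rewrite subrr pge0.
rewrite leq_eqVlt => /orP [/eqP ->|]; first by rewrite subrr pge0.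
rewrite ltnS => kj.
have -> : rho j.+1 - rho k = (rho j.+1 - rho j) + (rho j - rho k) by ring.
apply: pge_add => //; last exact: IH.
by apply: (pge_le _ (Hc j)); lia.
Qed.

Lemma approx_cauchy (z : K) : exists K0 : nat, forall j, (K0 <= j)%N ->
  pge 1 (approx rho z j - approx rho z K0).
Proof.
have [z0|z0] := eqVneq z.2 0.
  by exists 0%N => j _; rewrite /approx z0 !mul0r addr0 subrr pge0.
exists `|1 - vq p z.2|%N => j hj.
have -> : approx rho z j - approx rho z `|1 - vq p z.2|%N =
   z.2 * (rho j - rho `|1 - vq p z.2|%N) by rewrite /approx; ring.
have := pge_mul pr (_ : pge (vq p z.2) z.2) (cauchy hj).
move=> /(_ _) h; apply: pge_le (h _); first lia.
by rewrite pge_ne0.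
Qed.

Lemma pge_some r : exists n : nat, pge (- n%:Z) r.
Proof.
have [->|r0] := eqVneq r 0; first by exists 0%N; rewrite pge0.
by exists `|vq p r|%N; rewrite pge_ne0 //; lia.
Qed.

Lemma s_exists z : exists c, is_s p rho z c.
Proof.
have [K0 hK] := approx_cauchy z.
have [n hn] := pge_some (approx rho z K0).
have [a [da ha]] := digits_ex p23 hn.
exists (\sum_(0 <= i < n.+1) (a i)%:~R / p%:R ^+ i); split.
  by exists n.+1, a.
exists K0 => k hk.
rewrite /approx /Ksubq /=.
set S := \sum_(_ <= _ < _) _.
have -> : z.1 - S + z.2 * rho k = (approx rho z k - approx rho z K0) + (approx rho z K0 - S).
  by rewrite /approx; ring.
by apply: pge_add => //; apply: hK.
Qed.

Lemma t_exists z : exists c, is_t p rho z c.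
Proof.
have [K0 hK] := approx_cauchy z.
have [n hn] := pge_some (approx rho z K0).
have [a [da ha]] := digits_ex p23 hn.
exists (\sum_(1 <= i < n.+1) (a i)%:~R / p%:R ^+ i); split.
  by exists n.+1, a.
exists K0 => k hk.
rewrite /approx /Ksubq /=.
rewrite big_ltn //= expr0 divr1 in ha.
set S := \sum_(_ <= _ < _) _ in ha *.
have -> : z.1 - S + z.2 * rho k = (approx rho z k - approx rho z K0) +
   ((approx rho z K0 - ((a 0%N)%:~R + S)) + (a 0%N)%:~R).
  by rewrite /approx; ring.
apply: (pge_add pr); first by apply: (pge_le _ (hK _ hk)).
apply: (pge_add pr); first by apply: (pge_le _ ha).
exact: pge_int.
Qed.

Lemma sK_spec z : is_s p rho z (sK p rho z).
Proof. by apply: epsilon_spec; apply: s_exists. Qed.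

Lemma tK_spec z : is_t p rho z (tK p rho z).
Proof. by apply: epsilon_spec; apply: t_exists. Qed.

Lemma fin_digits_zp lo c : fin_digits p lo c -> zp p c.
Proof. by move=> [N [a [_ ->]]]; apply: zp_digits. Qed.

Lemma Kin_add j z c d : Kin_pow p rho j (Ksubq z c) -> pge j d ->
  Kin_pow p rho j (Ksubq z (c + d)).
Proof.
move=> [K0 h] hd; exists K0 => k hk; move: (h k hk).
rewrite /approx /Ksubq /= => h'.
have -> : z.1 - (c + d) + z.2 * rho k = (z.1 - c + z.2 * rho k) - d by ring.
exact: pge_sub.
Qed.

Lemma sbar_zp z : zp p (sbar p rho z).
Proof.
rewrite /sbar; apply: zp_add; first by apply: zp_mul; [apply: zp_int|apply: (zp_int p)].
by have [h _] := sK_spec z; apply: fin_digits_zp h.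
Qed.

Lemma tbar_zp z : zp p (tbar p rho z).
Proof.
rewrite /tbar; apply: zp_add; first by apply: zp_int.
by have [h _] := tK_spec z; apply: fin_digits_zp h.
Qed.

Lemma sbar_pge z : Kin_pow p rho 1 (Ksubq z (sbar p rho z)).
Proof.
rewrite /sbar addrC; have [_ h] := sK_spec z; apply: Kin_add => //.
by have := pge_mul pr (pge_int p (roundq ((Ktrd z - sK p rho z) / p%:R))) (pge_pexp pr 1);
  rewrite add0r expr1.
Qed.

Lemma tbar_pge z : Kin_pow p rho 0 (Ksubq z (tbar p rho z)).
Proof.
rewrite /tbar addrC; have [_ h] := tK_spec z; apply: Kin_add => //.
exact: pge_int.
Qed.

Lemma sbar_near z : `|z.1 - sbar p rho z| <= p%:R / 2.
Proof.
rewrite /sbar /Ktrd; set s := sK p rho z; set t := (z.1 - s) / p%:R.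
have h := roundq_near t.
have -> : z.1 - ((roundq t)%:~R * p%:R + s) = p%:R * (t - (roundq t)%:~R).
  by rewrite /t; field; rewrite pnz.
rewrite normrM ger0_norm ?ler0n //.
have hp : (0 : rat) <= p%:R by rewrite ler0n.
by rewrite ler_pM2l // ltr0n prime_gt0.
Qed.

Lemma tbar_near z : `|z.1 - tbar p rho z| <= 2^-1.
Proof.
rewrite /tbar /Ktrd; set s := tK p rho z.
have h := roundq_near (z.1 - s).
by move: h; congr (_ <= _); congr `|_|; ring.
Qed.

End Seq.

Lemma rat_sq_int (r : rat) (m : int) : r ^+ 2 = m%:~R -> exists z : int, r = z%:~R.
Proof.
move=> E.
have [->|r0] := eqVneq r 0; first by exists 0.
have [d1|dn1] := eqVneq (denq r) 1.
  by exists (numq r); rewrite -[in LHS](divq_num_den r) d1 divr1.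
set l := pdiv `|denq r|.
have dpos : (1 < `|denq r|)%N.
  have := denq_gt0 r; move: dn1; lia.
have lp : prime l by apply: pdiv_prime.
have ld : (l %| `|denq r|)%N by apply: pdiv_dvd.
have v0 : vq l r < 0.
  rewrite /vq.
  have ln : logn l `|numq r| = 0%N.
    apply: logn_coprime; rewrite prime_coprime //; apply/negP => ln.
    have := coprime_num_den r; rewrite /coprime => /eqP g.
    have : (l %| gcdn `|numq r| `|denq r|)%N by rewrite dvdn_gcd ln ld.
    by rewrite g dvdn1 => /eqP l1; move: lp; rewrite l1.
  have : (0 < logn l `|denq r|)%N by rewrite logn_gt0 mem_primes lp ld absz_gt0 denq_neq0.
  rewrite ln; lia.
have m0 : m != 0.
  apply/eqP => m00; move: E; rewrite m00 mulr0z => /eqP.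
  by rewrite expf_eq0 (negbTE r0) andbF.
have := congr1 (vq l) E; rewrite (vq_int l m) vq_exp //.
lia.
Qed.

Section Step.
Variable p : nat.
Hypothesis p23 : p = 2%N \/ p = 3%N.
Variable rho : nat -> rat.
Variable D : int.
Hypothesis HD : ~ (exists m : int, m * m = D).
Hypothesis Hsq : forall k : nat, padic_ge p k%:Z (rho k ^+ 2 - D%:~R).
Notation pge := (padic_ge p).
Let pr := pr p23.

Lemma nonsq (c y : rat) : y != 0 -> c ^+ 2 - D%:~R * y ^+ 2 != 0.
Proof.
move=> y0; apply/negP => /eqP E.
have : (c / y) ^+ 2 = D%:~R.
  apply/eqP; rewrite expr_div_n -subr_eq0.
  have -> : c ^+ 2 / y ^+ 2 - D%:~R = (c ^+ 2 - D%:~R * y ^+ 2) / y ^+ 2.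
    by field.
  by rewrite E mul0r.
move=> h2; have [z hz] := rat_sq_int h2; apply: HD; exists z; apply: (@intr_inj rat).
by rewrite rmorphM /= -hz -expr2 h2.
Qed.

Lemma Dnz : D != 0.
Proof. by apply/eqP => D0; apply: HD; exists 0; rewrite D0. Qed.

Lemma vq_strict a b : a != 0 -> pge (vq p a + 1) b -> a + b != 0 /\ vq p (a + b) = vq p a.
Proof.
move=> a0; have [->|b0] := eqVneq b 0; first by rewrite addr0.
rewrite pge_ne0 // => hb.
have ab0 : a + b != 0.
  apply/eqP => E; have eb : b = - a by apply/eqP; rewrite -addr_eq0 addrC E.
  move: hb; rewrite eb /vq numqN denqN abszN; lia.
split => //.
have h1 : vq p a <= vq p (a + b) by apply: vq_add => //; lia.
have vN : vq p (- b) = vq p b by rewrite /vq numqN denqN abszN.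
have h2 : vq p (a + b) <= vq p a.
  rewrite leNgt; apply/negP => lt.
  have := @vq_add p pr (vq p a + 1) (a + b) (- b) ab0.
  rewrite oppr_eq0 addrK b0 a0 vN => /(_ isT isT _ hb).
  lia.
lia.
Qed.

Definition k1 := (`|vq p D%:~R|%N + 1)%N.

Lemma rho_val k : (k1 <= k)%N -> rho k != 0 /\ vq p (rho k) *+ 2 = vq p D%:~R.
Proof.
move=> hk.
have Dq0 : (D%:~R : rat) != 0 by rewrite intr_eq0 Dnz.
have h : pge (vq p D%:~R + 1) (rho k ^+ 2 - D%:~R).
  by apply: (pge_le _ (Hsq k)); rewrite /k1 in hk; lia.
have [n0 e] := vq_strict Dq0 h.
have E : D%:~R + (rho k ^+ 2 - D%:~R) = rho k ^+ 2 :> rat by ring.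
rewrite E in n0 e.
have r0 : rho k != 0 by apply: contraNneq n0 => ->; rewrite expr0n.
by split => //; rewrite -vq_exp.
Qed.

Lemma rho_val_const k : (k1 <= k)%N -> vq p (rho k) = vq p (rho k1).
Proof.
move=> hk; have [_ e1] := rho_val hk; have [_ e2] := rho_val (leqnn k1).
move: e1 e2; lia.
Qed.

Definition Cst := - vq p 2 - vq p (rho k1).

Lemma norm_approx c y (N := c ^+ 2 - D%:~R * y ^+ 2) k : y != 0 -> N != 0 ->
  (`|vq p N - (vq p y) *+ 2|%N + 1 <= k)%N ->
  let Nk := (c + y * rho k) * (c - y * rho k) in
  Nk != 0 /\ vq p Nk = vq p N /\ pge 1 ((Nk - N) / N).
Proof.
move=> y0 N0 hk Nk.
have e : Nk = N + (- y ^+ 2 * (rho k ^+ 2 - D%:~R)) by rewrite /Nk /N; ring.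
have hy : pge (vq p y *+ 2) (- y ^+ 2).
  by apply: pge_opp; rewrite pge_ne0 ?expf_neq0 // vq_exp.
have hd := pge_mul pr hy (Hsq k).
have hd' : pge (vq p N + 1) (- y ^+ 2 * (rho k ^+ 2 - D%:~R)).
  by apply: (pge_le _ hd); lia.
have [n0 ev] := vq_strict N0 hd'.
rewrite e; split => //; split => //.
have -> : N + - y ^+ 2 * (rho k ^+ 2 - D%:~R) - N = - y ^+ 2 * (rho k ^+ 2 - D%:~R) by ring.
have hi : pge (- vq p N) N^-1 by rewrite pge_ne0 ?invr_eq0 // vq_inv.
by apply: (pge_le _ (pge_mul pr hd' hi)); lia.
Qed.

End Step.

Section Step2.
Variable p : nat.
Hypothesis p23 : p = 2%N \/ p = 3%N.
Variable rho : nat -> rat.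
Variable D : int.
Hypothesis HD : ~ (exists m : int, m * m = D).
Hypothesis Hsq : forall k : nat, padic_ge p k%:Z (rho k ^+ 2 - D%:~R).
Notation pge := (padic_ge p).
Let pr := pr p23.

Lemma vqN a : vq p (- a) = vq p a.
Proof. by rewrite /vq numqN denqN abszN. Qed.

Lemma Kinv_y z b : z.2 != 0 -> (Kinv D (Ksubq z b)).2 != 0.
Proof.
move=> y0; rewrite /Kinv /Ksubq /= mulf_eq0 oppr_eq0 invr_eq0 negb_or y0 /=.
exact: nonsq.
Qed.

Lemma step_val z b : z.2 != 0 -> Kin_pow p rho 0 (Ksubq z b) ->
  vq p (Kinv D (Ksubq z b)).2 <= Num.max (vq p z.2) (Cst p rho D).
Proof.
move=> y0 [K0 hK].
rewrite /Kinv /Ksubq /=.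
set c := z.1 - b; set y := z.2 in y0 hK *.
have N0 := nonsq HD c y0.
set N := c ^+ 2 - D%:~R * y ^+ 2 in N0 *.
set k := (K0 + k1 p D + (`|vq p N - (vq p y) *+ 2|%N + 1))%N.
have [Nk0 [vNk _]] := @norm_approx p p23 rho D Hsq c y k y0 N0 (leq_addl _ _).
set A := c + y * rho k in Nk0 vNk; set B := c - y * rho k in Nk0 vNk.
have A0 : A != 0 by move: Nk0; rewrite mulf_eq0 negb_or => /andP [].
have B0 : B != 0 by move: Nk0; rewrite mulf_eq0 negb_or => /andP [].
have hA : 0 <= vq p A.
  have := hK k (_ : (K0 <= k)%N); rewrite /approx /Ksubq /= -/c -/y -/A pge_ne0 //.
  by apply; rewrite /k; lia.
have eN : vq p N = vq p A + vq p B by rewrite -vNk vq_mul.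
have hk1 : (k1 p D <= k)%N by rewrite /k; lia.
have [r0 _] := rho_val p23 HD Hsq hk1.
have vr := rho_val_const p23 HD Hsq hk1.
rewrite mulNr vqN vq_div //.
have [vN|vN] := leP 0 (vq p N).
  by rewrite le_max; apply/orP; left; lia.
rewrite le_max; apply/orP; right.
have two0 : (2 : rat) != 0 by [].
have v2 : vq p (2 * y * rho k) = vq p 2 + vq p y + vq p (rho k).
  by rewrite !vq_mul ?mulf_neq0.
have hB : vq p (2 * y * rho k) <= vq p B.
  rewrite leNgt; apply/negP => lt.
  have h : pge (vq p B + 1) (2 * y * rho k).
    by rewrite pge_ne0 ?mulf_neq0 //; lia.
  have [_ e] := vq_strict p23 B0 h.
  have eA : B + 2 * y * rho k = A by rewrite /A /B; ring.
  rewrite eA in e; lia.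
rewrite /Cst -vr; lia.
Qed.

Lemma step_neg z b : z.2 != 0 -> Kin_pow p rho 1 (Ksubq z b) ->
  Kvneg p rho (Kinv D (Ksubq z b)).
Proof.
move=> y0 [K0 hK] [K1 hK1].
move: hK1; rewrite /Kinv /Ksubq /approx /= => hK1.
move: hK; rewrite /Ksubq /approx /= => hK.
set c := z.1 - b in hK hK1; set y := z.2 in y0 hK hK1.
have N0 := nonsq HD c y0.
set N := c ^+ 2 - D%:~R * y ^+ 2 in N0 hK1.
set k := (K0 + K1 + (`|vq p N - (vq p y) *+ 2|%N + 1))%N.
have [_ [_ hd]] := @norm_approx p p23 rho D Hsq c y k y0 N0 (leq_addl _ _).
have k0 : (K0 <= k)%N by rewrite /k; lia.
have k1' : (K1 <= k)%N by rewrite /k; lia.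
have hA' := hK k k0.
have hB' := hK1 k k1'.
have hm := pge_mul pr hA' hB'.
have e : 1 = (c + y * rho k) * (c / N + - y / N * rho k) -
   ((c + y * rho k) * (c - y * rho k) - N) / N.
  by rewrite /N; field.
have := pge_sub pr hm hd; rewrite addr0 -e.
by rewrite (negbTE (pge1_1 _)).
Qed.

End Step2.

Lemma Kin_weak p rho i j z : i <= j -> Kin_pow p rho j z -> Kin_pow p rho i z.
Proof. by move=> ij [K0 h]; exists K0 => k hk; apply: (pge_le ij (h k hk)). Qed.

Lemma zp_scale p (p23 : p = 2%N \/ p = 3%N) (E : nat) r : zp p r -> r != 0 ->
  - (E%:Z) <= vq p r -> exists m : int, r * p%:R ^+ E = m%:~R.
Proof.
move=> [m [j ->]] r0 hv.
have m0 : m != 0 by apply: contraNneq r0 => ->; rewrite mul0r.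
have [jE|Ej] := leqP j E.
  exists (m * (p ^ (E - j))%N%:Z).
  rewrite rmorphM /= (_ : ((p ^ (E - j))%N%:Z%:~R : rat) = p%:R ^+ (E - j)); last by rewrite -natrX.
  rewrite [in LHS](_ : E = (j + (E - j))%N); last lia.
  by rewrite exprD; field; rewrite pexp_nz.
have pp := pr p23.
move: hv; rewrite vq_div ?intr_eq0 ?pexp_nz // (vq_int p m) (vq_pexp pp) => hv.
have hd : (p ^ (j - E) %| `|m|)%N.
  by rewrite pfactor_dvdn // ?absz_gt0 //; lia.
have hdz : ((p ^ (j - E))%N%:Z %| m)%Z by rewrite dvdzE.
exists (m %/ (p ^ (j - E))%N%:Z)%Z.
have e := divzK hdz.
have pj0 : ((p ^ (j - E))%N%:Z%:~R : rat) != 0.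
  by rewrite intr_eq0 -lt0n expn_gt0 prime_gt0.
apply: (mulIf pj0); rewrite -rmorphM /= e.
rewrite (_ : ((p ^ (j - E))%N%:Z%:~R : rat) = p%:R ^+ (j - E)); last by rewrite -natrX.
rewrite [in X in X * _](_ : j = (E + (j - E))%N); last lia.
by rewrite exprD; field; rewrite !pexp_nz.
Qed.

Section Main.
Variable p : nat.
Hypothesis p23 : p = 2%N \/ p = 3%N.
Variable rho : nat -> rat.
Variable D P Q : int.
Hypothesis HQ : Q != 0.
Hypothesis HD : ~ (exists m : int, m * m = D).
Hypothesis Hsq : forall k : nat, padic_ge p k%:Z (rho k ^+ 2 - D%:~R).
Hypothesis Hc : forall k : nat, padic_ge p k%:Z (rho k.+1 - rho k).
Notation pge := (padic_ge p).
Let pr := pr p23.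
Let alpha : K := (P%:~R / Q%:~R, 1 / Q%:~R).
Variable rule : nat -> K -> rat.
Notation al n := (cf_alpha D rule alpha n).
Notation bb n := (rule n (al n)).

Lemma Qr0 : (Q%:~R : rat) != 0. Proof. by rewrite intr_eq0. Qed.

Lemma al_S n : al n.+1 = Kinv D (Ksubq (al n) (bb n)). Proof. by []. Qed.

Lemma al_y0 n : (al n).2 != 0.
Proof.
elim: n => [|n IH]; first by rewrite /= div1r invr_eq0 Qr0.
by rewrite al_S; apply: Kinv_y.
Qed.

Definition Qn n : rat := Q%:~R / (al n).2.
Definition Pn n : rat := (al n).1 * Qn n.
Definition Rn n : rat := ((D * Q ^+ 2)%:~R - Pn n ^+ 2) / Qn n.

Lemma Qn0 n : Qn n != 0.
Proof. by rewrite /Qn mulf_neq0 ?invr_eq0 ?al_y0 ?Qr0. Qed.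

Lemma Nn0 n : ((al n).1 - bb n) ^+ 2 - D%:~R * (al n).2 ^+ 2 != 0.
Proof. exact: (nonsq HD _ (al_y0 n)). Qed.

Lemma Pn_S n : Pn n.+1 = bb n * Qn n - Pn n.
Proof.
rewrite /Pn /Qn al_S /Kinv /Ksubq /=.
have h1 := Nn0 n; have h2 := al_y0 n; have h3 := Qr0.
move: h1 h2; move: (bb n) => b; case: (al n) => x y /= h1 h2.
by field; rewrite ?h1 ?h2 ?h3.
Qed.

Lemma Rn_S n : Rn n.+1 = Qn n.
Proof.
rewrite /Rn /Pn /Qn al_S /Kinv /Ksubq /= rmorphM rmorphXn /=.
have h1 := Nn0 n; have h2 := al_y0 n; have h3 := Qr0.
move: h1 h2; move: (bb n) => b; case: (al n) => x y /= h1 h2.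
by field; rewrite ?h1 ?h2 ?h3.
Qed.

Lemma Qn_S n : Qn n.+1 = Rn n + (Pn n - Pn n.+1) * bb n.
Proof.
rewrite Pn_S /Rn /Pn /Qn al_S /Kinv /Ksubq /= rmorphM rmorphXn /=.
have h1 := Nn0 n; have h2 := al_y0 n; have h3 := Qr0.
move: h1 h2; move: (bb n) => b; case: (al n) => x y /= h1 h2.
by field; rewrite ?h1 ?h2 ?h3.
Qed.

Lemma Qn_S' n : Qn n.+1 = - ((al n).1 - bb n) ^+ 2 * Qn n + (D * Q ^+ 2)%:~R / Qn n.
Proof.
rewrite /Qn al_S /Kinv /Ksubq /= rmorphM rmorphXn /=.
have h1 := Nn0 n; have h2 := al_y0 n; have h3 := Qr0.
move: h1 h2; move: (bb n) => b; case: (al n) => x y /= h1 h2.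
by field; rewrite ?h1 ?h2 ?h3.
Qed.

Lemma Pn_S' n : Pn n.+1 = - ((al n).1 - bb n) * Qn n.
Proof. by rewrite Pn_S /Pn; ring. Qed.

Lemma RQ n : Rn n * Qn n = (D * Q ^+ 2)%:~R - Pn n ^+ 2.
Proof. by rewrite /Rn mulrVK // unitfE Qn0. Qed.

Lemma al_PQ n : al n = (Pn n / Qn n, Q%:~R / Qn n).
Proof.
rewrite /Pn /Qn; have h2 := al_y0 n; have h3 := Qr0.
move: h2; case: (al n) => x y /= h2.
by congr pair; field; rewrite ?h2 ?h3.
Qed.

Definition isZ (x : rat) := exists m : int, x = m%:~R.

Variable isT : nat -> Prop.
Hypothesis H1 : forall n, (bb n = sbar p rho (al n) /\ ~ isT n) \/
                          (bb n = tbar p rho (al n) /\ isT n).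
Hypothesis H2 : forall n, ~ isT n -> isT n.+1.

Lemma step_pge0 n : Kin_pow p rho 0 (Ksubq (al n) (bb n)).
Proof.
case: (H1 n) => [[-> _]|[-> _]]; last exact: (tbar_pge p23 Hc _).
by apply: (Kin_weak _ (sbar_pge p23 Hc _)).
Qed.

Lemma bb_zp n : zp p (bb n).
Proof. by case: (H1 n) => [[-> _]|[-> _]]; [apply: sbar_zp | apply: tbar_zp]. Qed.

Lemma near_all n : `|(al n).1 - bb n| <= 3 / 2.
Proof.
case: (H1 n) => [[-> _]|[-> _]].
  apply: le_trans (sbar_near p23 rho _) _.
  by case: p23 => ->; rewrite ?ler_pM2r //; lra.
by apply: le_trans (tbar_near p rho _) _; lra.
Qed.

Lemma near_T n : isT n -> `|(al n).1 - bb n| <= 2^-1.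
Proof.
move=> hT; case: (H1 n) => [[_ nT]|[-> _]]; first by case: (nT hT).
exact: tbar_near.
Qed.

Definition Y := Num.max (vq p (1 / Q%:~R)) (Cst p rho D).

Lemma vy n : vq p (al n).2 <= Y.
Proof.
elim: n => [|n IH]; first by rewrite /= /Y le_max lexx.
rewrite al_S; apply: le_trans (step_val p23 HD Hsq (al_y0 n) (step_pge0 n)) _.
by rewrite ge_max IH /Y le_max lexx orbT.
Qed.

Lemma zpn n : [/\ zp p (Pn n), zp p (Qn n) & zp p (Rn n)].
Proof.
elim: n => [|n [hP hQ hR]].
  have h3 := Qr0.
  split.
  - have -> : Pn 0 = (P * Q)%:~R by rewrite /Pn /Qn /= rmorphM /=; field.
    exact: zp_int.
  - have -> : Qn 0 = (Q * Q)%:~R by rewrite /Qn /= rmorphM /=; field.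
    exact: zp_int.
  - have -> : Rn 0 = (D - P ^+ 2)%:~R.
      by rewrite /Rn /Pn /Qn /= !rmorphM rmorphB !rmorphXn /=; field.
    exact: zp_int.
have hb := bb_zp n.
have hP' : zp p (Pn n.+1) by rewrite Pn_S; apply: zp_sub => //; apply: zp_mul.
split => //; last by rewrite Rn_S.
by rewrite Qn_S; apply: zp_add => //; apply: zp_mul => //; apply: zp_sub.
Qed.

Definition E : nat := `|Y - vq p Q%:~R|%N.

Lemma vQn n : - (E%:Z) <= vq p (Qn n).
Proof.
rewrite /Qn vq_div ?al_y0 ?Qr0 //; have := vy n; rewrite /E; move: (vq p (al n).2) (vq p Q%:~R) Y => a b c. lia.
Qed.


Lemma QnZ n : exists m : int, Qn n * p%:R ^+ E = m%:~R.
Proof. by have [_ h _] := zpn n; apply: (zp_scale p23 h (Qn0 n) (vQn n)). Qed.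

Lemma pE_pos : (0 : rat) < p%:R ^+ E.
Proof. by rewrite exprn_gt0 // ltr0n prime_gt0. Qed.

Lemma Qn_low n : 1 <= `|Qn n| * p%:R ^+ E.
Proof.
have [m hm] := QnZ n.
have m0 : m != 0.
  apply: contraNneq (Qn0 n) => m0; move: hm; rewrite m0 mulr0z => /eqP.
  by rewrite mulf_eq0 (negbTE (pexp_nz p23 E)) orbF.
rewrite -(ger0_norm (ltW pE_pos)) -normrM hm -intr_norm.
have : (1 <= `|m|)%R by lia.
by rewrite -(ler_int rat).
Qed.

Definition Kc : rat := `|(D * Q ^+ 2)%:~R| * p%:R ^+ E.

Lemma Kc_ge0 : 0 <= Kc.
Proof. by rewrite /Kc mulr_ge0 // ltW // pE_pos. Qed.

Lemma Qn_rec n : `|Qn n.+1| <= ((al n).1 - bb n) ^+ 2 * `|Qn n| + Kc.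
Proof.
rewrite Qn_S'; set c := (al n).1 - bb n; set d := (D * Q ^+ 2)%:~R.
apply: le_trans (ler_normD _ _) _.
rewrite normrM normrN normrX real_normK ?num_real // lerD2l.
have hq := Qn_low n; have qp : 0 < `|Qn n| by rewrite normr_gt0 Qn0.
rewrite normrM normfV ler_pdivrMr // /Kc.
have := pE_pos; have : 0 <= `|d| by [].
move: (`|d|) (`|Qn n|) (p%:R ^+ E : rat) hq qp => a b t h1 h2 h3 h4; nra.
Qed.

Definition U : rat := Num.max `|Qn 0| (3 * Kc).
Definition W : rat := Kc + 9 / 4 * U.

Lemma U_ge : `|Qn 0| <= U /\ 3 * Kc <= U.
Proof. by rewrite /U; split; rewrite le_max lexx ?orbT. Qed.

Lemma Jinv n : `|Qn n| <= U \/ (`|Qn n| <= W /\ isT n).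
Proof.
have [u1 u2] := U_ge; have k0 := Kc_ge0.
elim: n => [|n IH]; first by left.
have hr := Qn_rec n.
set c := (al n).1 - bb n in hr.
have q0 : 0 <= `|Qn n| by [].
have c94 : c ^+ 2 <= 9 / 4.
  have := near_all n; rewrite -/c => h.
  rewrite -real_normK ?num_real //.
  have : 0 <= `|c| by []. move: (`|c|) h => x h1 h2; nra.
case: (classic (isT n)) => hT.
  have c14 : c ^+ 2 <= 1 / 4.
    have := near_T hT; rewrite -/c => h.
    rewrite -real_normK ?num_real //.
    have : 0 <= `|c| by []. move: (`|c|) h => x h1 h2; nra.
  left; have hm : c ^+ 2 * `|Qn n| <= 1 / 4 * `|Qn n| by rewrite ler_wpM2r.
  case: IH => [h|[h _]]; rewrite /W in h; lra.
right; split; last exact: H2.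
have hm : c ^+ 2 * `|Qn n| <= 9 / 4 * `|Qn n| by rewrite ler_wpM2r.
case: IH => [h|[_ h]]; last by case: hT.
rewrite /W; lra.
Qed.

Lemma Qn_bound n : `|Qn n| <= W.
Proof.
have [u1 u2] := U_ge; have k0 := Kc_ge0.
have U0 : 0 <= U by apply: le_trans u1.
by case: (Jinv n) => [h|[h _]] //; rewrite /W; lra.
Qed.

Lemma Pn_bound n : `|Pn n.+1| <= 3 / 2 * W.
Proof.
rewrite Pn_S' normrM normrN; apply: ler_pM => //; first exact: near_all.
exact: Qn_bound.
Qed.

Lemma PnZ n : exists m : int, Pn n.+1 * p%:R ^+ E = m%:~R.
Proof.
have [a ha] := QnZ n.+1; have [b hb] := QnZ n.
have e : (Pn n.+1 * p%:R ^+ E) ^+ 2 = ((D * Q ^+ 2) * (p ^ E)%N%:Z ^+ 2 - a * b)%:~R.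
  rewrite rmorphB !rmorphM !rmorphXn /= -ha -hb.
  rewrite (_ : ((p%:Z)%:~R : rat) = p%:R) //.
  have := RQ n.+1; rewrite Rn_S => h.
  have hP : Pn n.+1 ^+ 2 = (D * Q ^+ 2)%:~R - Qn n * Qn n.+1 by rewrite h; ring.
  rewrite exprMn hP rmorphM rmorphXn /=.
  move: (Qn n) (Qn n.+1) (p%:R ^+ E : rat) => x y t; ring.
exact: rat_sq_int e.
Qed.


End Main.



Section Main2.
Variable p : nat.
Hypothesis p23 : p = 2%N \/ p = 3%N.
Variable rho : nat -> rat.
Variable D P Q : int.
Hypothesis HQ : Q != 0.
Hypothesis HD : ~ (exists m : int, m * m = D).
Hypothesis Hsq : forall k : nat, padic_ge p k%:Z (rho k ^+ 2 - D%:~R).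
Hypothesis Hc : forall k : nat, padic_ge p k%:Z (rho k.+1 - rho k).
Let alpha : K := (P%:~R / Q%:~R, 1 / Q%:~R).
Variable rule : nat -> K -> rat.
Notation al n := (cf_alpha D rule alpha n).
Notation bb n := (rule n (al n)).
Variable isT : nat -> Prop.
Hypothesis H1 : forall n, (bb n = sbar p rho (al n) /\ ~ isT n) \/
                          (bb n = tbar p rho (al n) /\ isT n).
Hypothesis H2 : forall n, ~ isT n -> isT n.+1.
Variable cls : nat -> bool.
Hypothesis H3 : forall i j, (0 < i)%N -> (0 < j)%N -> cls i = cls j ->
  (forall z, rule i z = rule j z) /\ cls i.+1 = cls j.+1.

Variable e : nat.
Hypothesis eE : e = E p rho D Q.
Variable w : rat.
Hypothesis wW : w = W p rho D P Q rule.
Let Pn' := Pn D P Q rule.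
Let Qn' := Qn D P Q rule.

Lemma Qb n : `|Qn' n| <= w.
Proof. rewrite wW; exact: (Qn_bound p23 HQ HD Hsq Hc H1 H2 n). Qed.
Lemma Pb n : `|Pn' n.+1| <= 3 / 2 * w.
Proof. rewrite wW; exact: (Pn_bound p23 HQ HD Hsq Hc H1 H2 n). Qed.
Lemma PZ n : exists m : int, Pn' n.+1 * p%:R ^+ e = m%:~R.
Proof. rewrite eE; exact: (PnZ p23 HQ HD Hsq Hc H1 n). Qed.
Lemma QZ n : exists m : int, Qn' n * p%:R ^+ e = m%:~R.
Proof. rewrite eE; exact: (QnZ p23 HQ HD Hsq Hc H1 n). Qed.
Lemma aPQ n : al n = (Pn' n / Qn' n, Q%:~R / Qn' n).
Proof. exact: (al_PQ P HQ HD rule n). Qed.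
Lemma pEpos : (0 : rat) < p%:R ^+ e.
Proof. by rewrite exprn_gt0 // ltr0n prime_gt0 // pr. Qed.


Definition st n : int * int * bool :=
  (numq (Pn' n * p%:R ^+ e), numq (Qn' n * p%:R ^+ e), cls n).

Lemma stP n : (0 < n)%N ->
  Pn' n * p%:R ^+ e = (st n).1.1%:~R /\ Qn' n * p%:R ^+ e = (st n).1.2%:~R.
Proof.
case: n => // n _; rewrite /st /=.
have [a ha] := PZ n; have [b hb] := QZ n.+1.
by rewrite ha hb !numq_int.
Qed.

Definition Bd : nat := `|Num.ceil (3 / 2 * w * p%:R ^+ e)|%N.

Lemma w_ge0 : 0 <= w.
Proof. exact: le_trans (Qb 0). Qed.

Lemma absz_le (m : int) (x : rat) : `|m%:~R : rat| <= x * p%:R ^+ e -> x <= 3 / 2 * w ->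
  (`|m|%N <= Bd)%N.
Proof.
move=> h hx.
have h2 : `|m%:~R : rat| <= 3 / 2 * w * p%:R ^+ e.
  by apply: le_trans h _; rewrite ler_pM2r; [exact: hx | exact: pEpos].
have h3 := real_ceil_ge (num_real (3 / 2 * w * p%:R ^+ e)).
have h4 : (`|m|%:~R : rat) <= (Num.ceil (3 / 2 * w * p%:R ^+ e))%:~R.
  by rewrite intr_norm; apply: le_trans h2 h3.
rewrite ler_int in h4; rewrite /Bd.
move: h4; move: (Num.ceil _) => c; lia.
Qed.


Lemma st_bound n : (0 < n)%N -> (`|(st n).1.1|%N <= Bd)%N /\ (`|(st n).1.2|%N <= Bd)%N.
Proof.
move=> n0; have [hP hQ] := stP n0.
have w0 := w_ge0.
split.
  apply: (@absz_le _ `|Pn' n|); first by rewrite -hP normrM (ger0_norm (ltW pEpos)).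
  by case: n n0 {hP hQ} => // n _; apply: Pb.
apply: (@absz_le _ `|Qn' n|); first by rewrite -hQ normrM (ger0_norm (ltW pEpos)).
have := Qb n; move: (`|Qn' n|) => q hq; lra.
Qed.

Definition Rg : seq int := [seq (i%:Z - Bd%:Z) | i <- iota 0 (Bd + Bd).+1].
Definition Sg : seq (int * int * bool) :=
  [seq (ab, c) | ab <- [seq (a, b) | a <- Rg, b <- Rg], c <- [:: true; false]].

Lemma Rg_mem (m : int) : (`|m|%N <= Bd)%N -> m \in Rg.
Proof.
rewrite /Rg; move: Bd => B h; apply/mapP; exists (absz (m + B%:Z)%R).
  by rewrite mem_iota; lia.
lia.
Qed.


Lemma st_mem n : (0 < n)%N -> st n \in Sg.
Proof.
move=> n0; have [h1 h2] := st_bound n0.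
move: (st n) h1 h2 => [[a b] c] /= h1 h2.
apply: (allpairs_f (fun ab c => (ab, c))); first by apply: allpairs_f; apply: Rg_mem.
by case: c.
Qed.

Lemma pigeon : exists i j, [/\ (0 < i)%N, (i < j)%N & st i = st j].
Proof.
set T := size Sg.
set s1 := [seq st n | n <- iota 1 T.+1].
have : ~~ uniq s1.
  apply/negP => u.
  have := uniq_leq_size u (_ : {subset s1 <= Sg}).
  rewrite size_map size_iota /T ltnn => /(_ _)/notF; apply.
  by move=> x /mapP [n]; rewrite mem_iota => /andP [h _] ->; apply: st_mem.
move=> /(uniqPn (0, 0, true)) [i [j [ij js ee]]].
move: js ee; rewrite size_map size_iota => js.
rewrite !(nth_map 0%N) ?size_iota //; last by lia.
rewrite !nth_iota //; last by lia.
move=> ee; exists (1 + i)%N, (1 + j)%N; split => //; lia.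
Qed.


Lemma st_eq i j : (0 < i)%N -> (0 < j)%N -> st i = st j -> al i = al j /\ cls i = cls j.
Proof.
move=> i0 j0 ee; have [hPi hQi] := stP i0; have [hPj hQj] := stP j0.
move: ee hPi hQi hPj hQj; rewrite /st.
case=> e1 e2 e3 /= hPi hQi hPj hQj.
split => //.
have eP : Pn' i = Pn' j.
  by apply: (mulIf (pexp_nz p23 e)); rewrite hPi hPj e1.
have eQ : Qn' i = Qn' j.
  by apply: (mulIf (pexp_nz p23 e)); rewrite hQi hQj e2.
by rewrite aPQ (aPQ j) eP eQ.
Qed.

Lemma propag i j : (0 < i)%N -> (0 < j)%N -> al i = al j -> cls i = cls j ->
  forall m, al (i + m) = al (j + m) /\ cls (i + m) = cls (j + m).
Proof.
move=> i0 j0 ea ec; elim=> [|m [IHa IHc]]; first by rewrite !addn0.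
have ip : (0 < i + m)%N by lia.
have jp : (0 < j + m)%N by lia.
have [hr hc] := H3 ip jp IHc.
rewrite !addnS; split => //.
by rewrite /= IHa hr.
Qed.

Lemma generic : ult_periodic_expansion D rule alpha.
Proof.
split.
  by move=> n ee; have := al_y0 P HQ HD rule n; rewrite ee eqxx.
have [i [j [i0 ij ee]]] := pigeon.
have j0 : (0 < j)%N by lia.
have [ea ec] := st_eq i0 j0 ee.
exists i, (j - i)%N; split; first lia.
move=> n hn; rewrite /cf_b.
have -> : n = (i + (n - i))%N by lia.
have -> : (i + (n - i) + (j - i))%N = (j + (n - i))%N by lia.
have [h1 h2] := propag i0 j0 ea ec (n - i).
have ip : (0 < i + (n - i))%N by lia.
have jp : (0 < j + (n - i))%N by lia.
have [hr _] := H3 jp ip (esym h2).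
by rewrite h1 hr.
Qed.



End Main2.

Unset Implicit Arguments.
Theorem theorem2 (p : nat) (rho : nat -> rat) (D P Q : int) :
  (p = 2%N \/ p = 3%N) ->
  Q != 0 ->
  ~ (exists m : int, m * m = D) ->
  (* rho converges p-adically to a square root of D in Q_p *)
  (forall k : nat, padic_ge p k%:Z (rho k ^+ 2 - D%:~R)) ->
  (forall k : nat, padic_ge p k%:Z (rho k.+1 - rho k)) ->
  let alpha : K := (P%:~R / Q%:~R, 1 / Q%:~R) in
  ult_periodic_expansion D (ruleA p rho) alpha /\
  ult_periodic_expansion D (ruleB p rho) alpha.
Proof.
move=> p23 HQ HD Hsq Hc alpha.
split.
- set al := cf_alpha D (ruleA p rho) alpha.
  have H1 : forall n, (ruleA p rho n (al n) = sbar p rho (al n) /\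
                       ~ ((0 < n)%N /\ Kvneg p rho (al n))) \/
                      (ruleA p rho n (al n) = tbar p rho (al n) /\
                       ((0 < n)%N /\ Kvneg p rho (al n))).
    case=> [|n]; first by left; split => // -[].
    rewrite /ruleA; case: excluded_middle_informative => h.
      by right.
    by left; split => // -[].
  have H2 : forall n, ~ ((0 < n)%N /\ Kvneg p rho (al n)) ->
                      ((0 < n.+1)%N /\ Kvneg p rho (al n.+1)).
    move=> n nT; split => //.
    case: (H1 n) => [[e _]|[_ h]]; last by case: (nT h).
    rewrite /al /= -/al e.
    apply: (step_neg p23 HD Hsq (al_y0 P HQ HD (ruleA p rho) n)).
    exact: sbar_pge.
  apply: (generic p23 HQ HD Hsq Hc H1 H2 (cls := fun _ => true)) => //.
  by move=> [|i] [|j].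
- set al := cf_alpha D (ruleB p rho) alpha.
  have H1 : forall n, (ruleB p rho n (al n) = sbar p rho (al n) /\ ~ (odd n)) \/
                      (ruleB p rho n (al n) = tbar p rho (al n) /\ odd n).
    move=> n; rewrite /ruleB; case: (odd n); [right | left] => //.
  have H2 : forall n, ~ (odd n) -> odd n.+1.
    by move=> n /negP; rewrite /= => ->.
  apply: (generic p23 HQ HD Hsq Hc H1 H2 (cls := odd)) => //.
  by move=> i j _ _ h; split; [move=> z; rewrite /ruleB h | rewrite /= h].
Qed.
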